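(* For every polynomial $f(\mathbf{x}) \in \mathbb{C}[x_1,\ldots,x_n]$ of degree $d$, we have $\mathrm{commRO}(f) \leq (d+1)^2 \cdot \mathrm{DPD}(f)$.
   Context: For $f \in \mathbb{C}[x_1,\ldots,x_n]$, the dimension of partial derivatives is $\mathrm{DPD}(f) := \dim_{\mathbb{C}} \mathrm{span}_{\mathbb{C}}\{\partial_{\mathbf{e}} f : \mathbf{e} \in \mathbb{N}^n\}$, where $\partial_{\mathbf{e}} f$ is the partial derivative of $f$ with respect to the monomial $x_1^{e_1}\cdots x_n^{e_n}$ (so $\mathbf{e}=\mathbf{0}$ gives $f$ itself). A read-once oblivious ABP (ROABP) of width $w$ computing an $n$-variate polynomial $f$ of individual degree at most $d$ consists of a permutation $\sigma$ of $[n]$, matrices $A_{j,k} \in \mathbb{C}^{w\times w}$ for $j\in[n]$, $0\le k\le d$, and vectors $\mathbf{u},\mathbf{v}\in\mathbb{C}^w$ such that $f(\mathbf{x}) = \mathbf{u}^{T} M_{\sigma(1)}(x_{\sigma(1)}) \cdots M_{\sigma(n)}(x_{\sigma(n)}) \mathbf{v}$, where $M_j(x_j) = \sum_{k=0}^{d} A_{j,k} x_j^k$. The $A_{j,k}$ are its coefficient matrices. A commutative ROABP is an ROABP whose coefficient matrices all pairwise commute. $\mathrm{commRO}(f)$ denotes the smallest $w$ such that some width-$w$ commutative ROABP computes $f$. *)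

(* Defs.v *)
From HB Require Import structures.
From mathcomp Require Import all_boot all_algebra all_fingroup.
From mathcomp Require Import reals complex.
From mathcomp Require Import mpoly.
From Stdlib Require Import ClassicalEpsilon.

Set Implicit Arguments.
Unset Strict Implicit.
Unset Printing Implicit Defensive.

Import GRing.Theory.
Local Open Scope ring_scope.

Definition pbool (P : Prop) : bool :=
  if excluded_middle_informative P then true else false.

Lemma pboolP (P : Prop) : reflect P (pbool P).
Proof. rewrite /pbool; case: excluded_middle_informative => H; by constructor. Qed.

(* The least natural number satisfying P, or 0 if none exists. *)
Definition least_nat (P : nat -> Prop) : nat :=
  match excluded_middle_informative (exists k, pbool (P k)) with
  | left H => ex_minn H
  | right _ => 0%N
  end.

Section Defs.
Variables (F : fieldType) (n : nat).

Definition derivs_spanned_by (f : {mpoly F[n]}) (k : nat) : Prop :=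
  exists g : 'I_k -> {mpoly F[n]},
    forall e : 'X_{1..n}, exists c : 'I_k -> F,
      mderivm e f = \sum_(i < k) c i *: g i.

(* DPD(f) = dim span{ d_e f : e in N^n } = least size of a spanning family. *)
Definition DPD (f : {mpoly F[n]}) : nat := least_nat (derivs_spanned_by f).

Definition roabp_layer (w D : nat) (A : 'I_n -> 'I_D.+1 -> 'M[F]_w) (j : 'I_n)
  : 'M[{mpoly F[n]}]_w :=
  \sum_(k < D.+1) map_mx (fun c : F => c%:MP * 'X_j ^+ k) (A j k).

Definition roabp_poly (w D : nat) (s : {perm 'I_n})
  (A : 'I_n -> 'I_D.+1 -> 'M[F]_w) (u v : 'cV[F]_w) : {mpoly F[n]} :=
  ((map_mx (fun c : F => c%:MP) u)^T
     *m (\prod_(i < n) roabp_layer A (s i))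
     *m map_mx (fun c : F => c%:MP) v) ord0 ord0.

Definition has_commROABP (f : {mpoly F[n]}) (w : nat) : Prop :=
  exists (D : nat) (s : {perm 'I_n}) (A : 'I_n -> 'I_D.+1 -> 'M[F]_w)
         (u v : 'cV[F]_w),
    (forall (j1 j2 : 'I_n) (k1 k2 : 'I_D.+1),
        A j1 k1 *m A j2 k2 = A j2 k2 *m A j1 k1)
    /\ f = roabp_poly s A u v.

Definition commRO (f : {mpoly F[n]}) : nat := least_nat (has_commROABP f).

End Defs.

(* Main.v *)
Require Import Defs.
From HB Require Import structures.
From mathcomp Require Import all_boot all_algebra all_fingroup.
From mathcomp Require Import reals complex.
From mathcomp Require Import mpoly.
From Stdlib Require Import ClassicalEpsilon.
Import GRing.Theory Num.Theory.
Local Open Scope ring_scope.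

Set Implicit Arguments.
Unset Strict Implicit.

Lemma prod_scale (R : comNzRingType) w (I : Type) (r : seq I) (a : I -> R)
  (G : I -> 'M[R]_w) :
  \prod_(i <- r) (a i *: G i) = (\prod_(i <- r) a i) *: \prod_(i <- r) G i.
Proof.
elim: r => [|x r IH]; first by rewrite !big_nil scale1r.
by rewrite !big_cons IH -!mulmxE -scalemxAl -scalemxAr scalerA.
Qed.

Lemma mderivm_coef0 (R : nzRingType) n (p : {mpoly R[n]}) (e : 'X_{1..n}) :
  (mderivm e p)@_0 = p@_e * (\prod_(i < n) (e i)`!)%:R.
Proof.
rewrite mderivmE raddf_sum /=.
have H : forall m', (p@_m' * (\prod_(i < n) (m' i)^_(e i))%:R *: 'X_[m' - e])@_0
   = if m' == e then p@_e * (\prod_(i < n) (e i)`!)%:R else 0.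
  move=> m'; rewrite mcoeffZ mcoeffX.
  have [->|ne] := eqVneq m' e.
    have -> : (e - e = 0)%MM by apply/mnmP => i; rewrite mnmBE mnm0E subnn.
    by rewrite eqxx mulr1; congr (_ * _%:R); apply: eq_bigr => i _; rewrite ffactnn.
  have [h0|] := eqVneq (m' - e)%MM 0%MM; last by rewrite mulr0.
  have [i lt] : exists i, (m' i < e i)%N.
    case: (pickP (fun i => (m' i < e i)%N)) => [i hi|H]; first by exists i.
    exfalso; move/eqP: ne; apply; apply/mnmP => i; apply/eqP; rewrite eqn_leq.
    have := mnmBE i m' e; rewrite h0 mnm0E => /esym/eqP; rewrite subn_eq0 => ->.
    by have := H i; rewrite ltnNge => /negbFE.
  by rewrite (bigD1 i) //= ffact_small // mul0n mulr0 mul0r.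
rewrite (eq_bigr _ (fun m' _ => H m')).
case: (boolP (e \in msupp p)) => [ein|enin].
  rewrite (bigD1_seq e) ?msupp_uniq //= eqxx [X in _ + X]big1 ?addr0 // => m' /negbTE -> //.
rewrite (memN_msupp_eq0 enin) mul0r [LHS]big1_seq // => m' /andP[_ hm].
by case: eqP hm => // ->; rewrite (negbTE enin).
Qed.

Section RO.
Variables (F : numFieldType) (n w D : nat) (h : 'I_w -> {mpoly F[n]})
  (B : 'I_n -> 'M[F]_w).
Hypothesis hB : forall j a, mderiv j (h a) = \sum_b B j a b *: h b.
Hypothesis hsz : forall a, (msize (h a) <= D.+1)%N.

Definition Ph (x : 'rV[F]_w) := \sum_a x 0 a *: h a.

Lemma PhB x j : Ph (x *m B j) = mderiv j (Ph x).
Proof.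
rewrite /Ph raddf_sum /=.
under [RHS]eq_bigr => a _ do rewrite mderivZ hB scaler_sumr.
rewrite exchange_big /=; apply: eq_bigr => b _.
rewrite mxE scaler_suml; apply: eq_bigr => a _; by rewrite scalerA.
Qed.

Lemma PhX x j k : Ph (x *m B j ^+ k) = iter k (mderiv j) (Ph x).
Proof.
elim: k => [|k IH]; first by rewrite expr0 mulmx1.
by rewrite exprSr -mulmxE mulmxA PhB IH.
Qed.

Lemma Phprod x (t : 'I_n -> nat) (l : seq 'I_n) :
  Ph (x *m \prod_(i <- l) B i ^+ t i) = mderivm (\sum_(i <- l) U_(i) *+ t i)%MM (Ph x).
Proof.
elim: l x => [|a l IH] x; first by rewrite !big_nil mulmx1 mderivm0m.
rewrite !big_cons -mulmxE mulmxA IH PhX mderivmDm mderivn_iter //.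
Qed.

Lemma Ph_coef0 y : (Ph y)@_0 = (y *m \col_a (h a)@_0) 0 0.
Proof.
rewrite /Ph raddf_sum mxE; apply: eq_bigr => a _; by rewrite /= mcoeffZ mxE.
Qed.

Lemma msize_Ph y : (msize (Ph y) <= D.+1)%N.
Proof.
apply: leq_trans (msize_sum _ _ _) _; apply/bigmax_leqP_seq => a _ _.
exact: leq_trans (msizeZ_le _ _) (hsz a).
Qed.

End RO.

Section RO2.
Variables (F : numFieldType) (n w D : nat) (h : 'I_w -> {mpoly F[n]})
  (B : 'I_n -> 'M[F]_w).
Hypothesis hB : forall j a, mderiv j (h a) = \sum_b B j a b *: h b.
Hypothesis hsz : forall a, (msize (h a) <= D.+1)%N.

Definition Amat (j : 'I_n) (k : 'I_D.+1) : 'M[F]_w := ((k`!)%:R)^-1 *: (B j ^+ k).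

Definition emon (t : {ffun 'I_n -> 'I_D.+1}) : 'X_{1..n} := [multinom (t i : nat) | i < n].

Lemma scal_term (c : 'rV[F]_w) (t : {ffun 'I_n -> 'I_D.+1}) :
  (c *m (\prod_i Amat i (t i)) *m \col_a (h a)@_0) 0 0 = (Ph h c)@_(emon t).
Proof.
rewrite prod_scale -scalemxAr -scalemxAl mxE -Ph_coef0 Phprod //.
have -> : (\sum_(i <- index_enum 'I_n) U_(i) *+ t i)%MM = emon t.
  by rewrite [RHS]multinomUE_id; apply: eq_bigr => i _; rewrite mnmE.
rewrite mderivm_coef0 natr_prod prodfV mulrCA.
have -> : \prod_(i < n) ((emon t i)`!)%:R = \prod_(i < n) ((t i)`!)%:R :> F.
  by apply: eq_bigr => i _; rewrite mnmE.
rewrite mulVf ?mulr1 //; rewrite prodf_seq_neq0; apply/allP => i _.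
by rewrite pnatr_eq0 -lt0n fact_gt0.
Qed.


Lemma layerE j : roabp_layer Amat j =
  \sum_(k < D.+1) ('X_j ^+ k) *: map_mx (fun c : F => c%:MP) (Amat j k).
Proof.
rewrite /roabp_layer; apply: eq_bigr => k _; apply/matrixP => a b.
by rewrite !mxE mulrC.
Qed.

Lemma prodE : \prod_(i < n) roabp_layer Amat ((1%g : {perm 'I_n}) i) =
  \sum_(t : {ffun 'I_n -> 'I_D.+1}) (\prod_(i < n) 'X_i ^+ t i) *:
     map_mx (fun c : F => c%:MP) (\prod_(i < n) Amat i (t i)).
Proof.
under eq_bigr => i _ do rewrite perm1 layerE.
rewrite bigA_distr_bigA; apply: eq_bigr => t _; rewrite prod_scale; congr (_ *: _).
have Hm : {morph map_mx (fun c : F => c%:MP_[n]) : x y / (x * y : 'M_w) >-> x * y}.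
  by move=> x y; rewrite -!mulmxE (map_mxM (mpolyC n (R:=F))).
by rewrite (big_morph _ Hm (map_mx1 (mpolyC n (R:=F)) _)).
Qed.


Lemma roabp_eq c : Ph h c = roabp_poly 1%g Amat c^T (\col_a (h a)@_0).
Proof.
rewrite /roabp_poly prodE map_trmx trmxK mulmx_sumr mulmx_suml summxE.
under eq_bigr => t _ do rewrite -scalemxAr -scalemxAl mxE -!(map_mxM (mpolyC n (R:=F))) mxE scal_term.
apply/mpolyP => m; rewrite [RHS]raddf_sum /=.
under eq_bigr => t _ do rewrite mulrC mul_mpolyC mcoeffZ.
have eX (t : {ffun 'I_n -> 'I_D.+1}) : \prod_(i < n) 'X_i ^+ t i = 'X_[emon t] :> {mpoly F[n]}.
  by rewrite (mpolyXE _ 1%g); apply: eq_bigr => i _; rewrite perm1 mnmE.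
under eq_bigr => t _ do rewrite eX mcoeffX.
case: (boolP [forall i, (m i <= D)%N]) => [/forallP Hm|].
  pose t0 : {ffun 'I_n -> 'I_D.+1} := [ffun i => inord (m i)].
  have et0 : emon t0 = m.
    by apply/mnmP => i; rewrite mnmE ffunE inordK //; apply: Hm.
  rewrite (bigD1 t0) //= et0 eqxx mulr1 big1 ?addr0 // => t ne.
  case: eqP => [em|]; last by rewrite mulr0.
  case/eqP: ne; apply/ffunP => i; apply/val_inj; rewrite ffunE /= -em mnmE inordK //; exact: ltn_ord.
rewrite negb_forall; case/existsP => i; rewrite -ltnNge => Hi.
rewrite big1 => [|t _]; last first.
  case: eqP => [em|]; last by rewrite mulr0.
  by move: Hi; rewrite -em mnmE ltnNge -ltnS ltn_ord.
apply: memN_msupp_eq0; apply: msize_mdeg_ge.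
have H1 := msize_Ph hsz c.
apply: (leq_trans H1).
by rewrite mdegE (bigD1 i) //= (leq_trans Hi) // leq_addr.
Qed.

Lemma has_roabp c (hcomm : forall j k, B j *m B k = B k *m B j) :
  has_commROABP (Ph h c) w.
Proof.
exists D, 1%g, Amat, c^T, (\col_a (h a)@_0); split; last exact: roabp_eq.
move=> j1 j2 k1 k2; rewrite /Amat -!scalemxAl -!scalemxAr !scalerA mulrC.
congr (_ *: _).
have c12 : GRing.comm (B j1) (B j2) by rewrite /GRing.comm -!mulmxE hcomm.
have := commrX k1 (commr_sym (commrX k2 c12)).
by rewrite /GRing.comm -!mulmxE => ->.
Qed.

End RO2.

Lemma msize_mderivm (R : nzRingType) n (e : 'X_{1..n}) (p : {mpoly R[n]}) :
  (msize (mderivm e p) <= msize p)%N.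
Proof.
rewrite mderivmE; apply: leq_trans (msize_sum _ _ _) _.
apply/bigmax_leqP_seq => m' hm' _; apply: leq_trans (msizeZ_le _ _) _.
by rewrite msizeX; apply: leq_ltn_trans (mdegB _ _) (msize_mdeg_lt hm').
Qed.

Lemma mderivm_big (R : nzRingType) n (e : 'X_{1..n}) (p : {mpoly R[n]}) :
  (msize p <= mdeg e)%N -> mderivm e p = 0.
Proof.
move=> le; rewrite mderivmE big1_seq // => m' /andP[_ hm'].
have lt := leq_trans (msize_mdeg_lt hm') le.
have [i hi] : exists i, (m' i < e i)%N.
  case: (pickP (fun i => (m' i < e i)%N)) => [i hi|H]; first by exists i.
  exfalso; move: lt; rewrite !mdegE ltnNge; move/negP; apply.
  by apply: leq_sum => i _; have := H i; rewrite ltnNge => /negbFE.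
by rewrite (bigD1 i) //= ffact_small // mul0n mulr0 scale0r.
Qed.

Section LA.
Variables (F : numFieldType) (n : nat) (f : {mpoly F[n]}).
Let b := msize f.
Let T := 'X_{1..n < b}.
Let N := #|{: T}|.

Definition coord (p : {mpoly F[n]}) : 'rV[F]_N := \row_i p@_(bmnm (enum_val i : T)).
Definition decode (y : 'rV[F]_N) : {mpoly F[n]} := \sum_i y 0 i *: 'X_[bmnm (enum_val i : T)].

Lemma coord_lin I (r : seq I) (c : I -> F) (g : I -> {mpoly F[n]}) :
  coord (\sum_(i <- r) c i *: g i) = \sum_(i <- r) c i *: coord (g i).
Proof.
apply/matrixP => x y; rewrite mxE summxE raddf_sum; apply: eq_bigr => i _.
by rewrite /= mcoeffZ !mxE.
Qed.

Lemma coord0 : coord 0 = 0.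
Proof. by apply/matrixP => x y; rewrite !mxE mcoeff0. Qed.

Lemma decode_mul m (u : 'rV[F]_m) (W : 'M[F]_(m, N)) :
  decode (u *m W) = \sum_a u 0 a *: decode (row a W).
Proof.
rewrite /decode; under eq_bigr => i _ do rewrite mxE scaler_suml.
rewrite exchange_big /=; apply: eq_bigr => a _; rewrite scaler_sumr.
by apply: eq_bigr => i _; rewrite mxE scalerA.
Qed.

Lemma coord_decode y : coord (decode y) = y.
Proof.
apply/matrixP => x j; rewrite ord1 mxE raddf_sum (bigD1 j) //= mcoeffZ mcoeffX eqxx mulr1.
rewrite big1 ?addr0 // => i ne; rewrite mcoeffZ mcoeffX.
rewrite (inj_eq val_inj) (inj_eq enum_val_inj) (negbTE ne) mulr0 //.
Qed.

Lemma decode_coord p : (msize p <= b)%N -> decode (coord p) = p.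
Proof.
move=> le; rewrite [RHS](mpolywE le) /decode.
rewrite (reindex (fun i : 'I_N => (enum_val i : T))) /=; last first.
  by apply: onW_bij; apply: enum_val_bij.
by apply: eq_bigr => i _; rewrite mxE.
Qed.

Lemma msize_decode y : (msize (decode y) <= b)%N.
Proof.
apply: leq_trans (msize_sum _ _ _) _; apply/bigmax_leqP_seq => i _ _.
by apply: leq_trans (msizeZ_le _ _) _; rewrite msizeX bmdeg.
Qed.

Definition Smat : 'M[F]_(N, N) := \matrix_(i < N) coord (mderivm (bmnm (enum_val i : T)) f).

Lemma L1 e : (coord (mderivm e f) <= Smat)%MS.
Proof.
case: (ltnP (mdeg e) b) => [lt|ge].
  pose e' : T := BMultinom lt.
  have := row_sub (enum_rank e') Smat; rewrite rowK enum_rankK //.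
by rewrite mderivm_big // coord0 sub0mx.
Qed.

Definition inV p := (msize p <= b)%N && (coord p <= Smat)%MS.

Lemma inV_exp p : inV p -> p =
  \sum_i (coord p *m pinvmx Smat) 0 i *: mderivm (bmnm (enum_val i : T)) f.
Proof.
move=> /andP[hs hc]; rewrite -{1}(decode_coord hs) -{1}(mulmxKpV hc) decode_mul.
apply: eq_bigr => i _; rewrite rowK decode_coord //; exact: msize_mderivm.
Qed.

Lemma inV_deriv p j : inV p -> inV (mderiv j p).
Proof.
move=> hp; apply/andP; split.
  rewrite -mderivmU1m; apply: (leq_trans (msize_mderivm U_(j) p)); by case/andP: hp.
rewrite (inV_exp hp) raddf_sum /=.
under eq_bigr => i _ do rewrite mderivZ -mderivmU1m -mderivmDm.
rewrite coord_lin; apply: summx_sub => i _; apply: scalemx_sub; exact: L1.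
Qed.

Lemma inV_derivm e : inV (mderivm e f).
Proof. by apply/andP; split; [exact: msize_mderivm | exact: L1]. Qed.

Let W := row_base Smat.
Let r := \rank Smat.
Definition hvec (a : 'I_r) := decode (row a W).

Lemma inV_h a : inV (hvec a).
Proof.
apply/andP; split; first exact: msize_decode.
by rewrite coord_decode -(eq_row_base Smat) row_sub.
Qed.

Lemma Ph_dec x : Ph hvec x = decode (x *m W).
Proof. by rewrite decode_mul. Qed.

Lemma inV_Ph p : inV p -> p = Ph hvec (coord p *m pinvmx W).
Proof.
move=> /andP[hs hc]; rewrite Ph_dec mulmxKpV ?decode_coord //.
by rewrite (eq_row_base Smat).
Qed.

Definition Bmat (j : 'I_n) : 'M[F]_r :=
  \matrix_(a, c) (coord (mderiv j (hvec a)) *m pinvmx W) 0 c.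

Lemma hB j a : mderiv j (hvec a) = \sum_c Bmat j a c *: hvec c.
Proof.
rewrite {1}(inV_Ph (inV_deriv j (inV_h a))) /Ph; apply: eq_bigr => c _.
by rewrite [in RHS]mxE mxE.
Qed.

Lemma Ph_inj x y : Ph hvec x = Ph hvec y -> x = y.
Proof.
rewrite !Ph_dec => /(congr1 coord); rewrite !coord_decode.
exact: (row_free_inj (row_base_free Smat)).
Qed.

Lemma hcomm j k : Bmat j *m Bmat k = Bmat k *m Bmat j.
Proof.
have H (x : 'rV_r) : x *m Bmat j *m Bmat k = x *m Bmat k *m Bmat j.
  apply: Ph_inj; rewrite !(PhB (hB)) mderiv_comm //.
apply/row_matrixP => a.
have e (M : 'M[F]_r) : row a M = row a 1%:M *m M by rewrite -row_mul mul1mx.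
by rewrite !row_mul (e (Bmat j)) (e (Bmat k)) H.
Qed.

Lemma hsz a : (msize (hvec a) <= b.+1)%N.
Proof. exact: leq_trans (msize_decode _) (leqnSn _). Qed.

Lemma main_has : has_commROABP f r.
Proof.
have hf : inV f by have := inV_derivm 0; rewrite mderivm0m.
have := has_roabp hB hsz (coord f *m pinvmx W) hcomm.
by rewrite -(inV_Ph hf).
Qed.

Lemma main_span : derivs_spanned_by f r.
Proof.
exists hvec => e; exists (fun i => (coord (mderivm e f) *m pinvmx W) 0 i).
exact: (inV_Ph (inV_derivm e)).
Qed.

Lemma main_rank k : derivs_spanned_by f k -> (r <= k)%N.
Proof.
case=> g Hg; pose G := \matrix_(i < k) coord (g i).
suff sub : (Smat <= G)%MS by apply: leq_trans (mxrankS sub) (rank_leq_row _).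
apply/row_subP => i; rewrite rowK.
have [c ->] := Hg (bmnm (enum_val i : T)).
rewrite coord_lin; apply: summx_sub => l _; apply: scalemx_sub.
by rewrite -(rowK (fun l => coord (g l)) l) row_sub.
Qed.

End LA.

Lemma least_le (P : nat -> Prop) w : P w -> (least_nat P <= w)%N.
Proof.
move=> Pw; rewrite /least_nat; case: excluded_middle_informative => [H|H].
  case: ex_minnP => m _ min; apply: min; exact/pboolP.
by exfalso; apply: H; exists w; apply/pboolP.
Qed.

Lemma least_spec (P : nat -> Prop) w : P w -> P (least_nat P).
Proof.
move=> Pw; rewrite /least_nat; case: excluded_middle_informative => [H|H].
  by case: ex_minnP => m /pboolP.
by exfalso; apply: H; exists w; apply/pboolP.
Qed.

Unset Implicit Arguments.
Set Strict Implicit.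

Theorem corollary1p5 (R : realType) (n : nat) (f : {mpoly R[i][n]}) :
  (commRO f <= ((msize f).-1).+1 ^ 2 * DPD f)%N.
Proof.
have h1 : (commRO f <= \rank (Smat f))%N by apply: least_le; exact: main_has.
have h2 : (\rank (Smat f) <= DPD f)%N.
  by apply: main_rank; apply: (least_spec (main_span f)).
apply: (leq_trans h1); apply: (leq_trans h2).
by rewrite leq_pmull // expn_gt0.
Qed.
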